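(* Let $d\ge2$ be an integer. For $\lambda\in(0,1)$ let $\bar F_{R,\lambda}$ be the solution of $\bar F'(w)=\lambda\bar F(w)^d-\bar F(w)$ with $\bar F(0)=1$, and let $\mathbb E[R_\lambda]=\int_0^\infty\bar F_{R,\lambda}(w)\,dw$. Then $$\lim_{\lambda\to1^-}-\frac{\mathbb E[R_\lambda]}{\log(1-\lambda)}=\frac1{d-1}.$$
   Context: $\bar F_{R,\lambda}$ is the ccdf of the limiting response time under the Red($d$) policy with i.i.d. exponential(1) replicas. *)

(* Defs.v *)
From Stdlib Require Import Reals.
From Coquelicot Require Import Coquelicot.
Open Scope R_scope.

Definition red_ccdf_solution (d : nat) (lam : R) (Fbar : R -> R) : Prop :=
  Fbar 0 = 1 /\
  filterlim Fbar (at_right 0) (locally 1) /\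
  (forall w, 0 < w -> is_derive Fbar w (lam * Fbar w ^ d - Fbar w)).

(* Main.v *)
Require Import Defs.
From Stdlib Require Import Reals Lra Lia Classical.
From Coquelicot Require Import Coquelicot.
Open Scope R_scope.

Lemma ball_R (x e y : R) : ball x e y <-> Rabs (y - x) < e.
Proof. split; intro H; exact H. Qed.

Definition Gf (k lam w : R) := exp (- ln (lam + (1-lam) * exp (k*w)) / k).

Lemma v_pos k lam w : 0 < lam < 1 -> 0 < lam + (1-lam) * exp (k*w).
Proof. intros H. pose proof (exp_pos (k*w)). nra. Qed.

Lemma exp_pow_n x n : exp x ^ n = exp (INR n * x).
Proof.
  induction n. simpl. rewrite Rmult_0_l, exp_0. reflexivity.
  rewrite S_INR. simpl pow. rewrite IHn. rewrite <- exp_plus. f_equal. ring.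
Qed.

Lemma G_pow kn lam w : (1 <= kn)%nat -> 0 < lam < 1 ->
  Gf (INR kn) lam w ^ kn = / (lam + (1-lam) * exp (INR kn * w)).
Proof.
  intros Hk Hl. unfold Gf. rewrite exp_pow_n.
  assert (0 < INR kn) by (apply lt_0_INR; lia).
  replace (INR kn * (- ln (lam + (1 - lam) * exp (INR kn * w)) / INR kn))
    with (- ln (lam + (1 - lam) * exp (INR kn * w))) by (field; lra).
  rewrite exp_Ropp, exp_ln; [reflexivity| apply v_pos; auto].
Qed.

Lemma G_deriv kn lam w : (1 <= kn)%nat -> 0 < lam < 1 ->
  is_derive (Gf (INR kn) lam) w (lam * Gf (INR kn) lam w ^ (S kn) - Gf (INR kn) lam w).
Proof.
  intros Hk Hl.
  assert (0 < INR kn) by (apply lt_0_INR; lia).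
  pose proof (v_pos (INR kn) lam w Hl).
  rewrite <- tech_pow_Rmult. 
  unfold Gf at 1. auto_derive.
  - lra.
  - rewrite (G_pow kn lam w Hk Hl). unfold Gf. unfold Rdiv.
    set (E := exp _). set (v := lam + _). set (X := exp (INR kn * w)).
    set (Y := exp (- ln v * / INR kn)). unfold v in *. field. split; apply Rgt_not_eq; [exact H0 | lra].
Qed.

Lemma exp_le_exp x y : x <= y -> exp x <= exp y.
Proof. intros H. destruct (Rle_lt_or_eq_dec _ _ H). left; apply exp_increasing; auto. subst; lra. Qed.

Lemma ln_le' x y : 0 < x -> x <= y -> ln x <= ln y.
Proof. intros Hx H. destruct (Rle_lt_or_eq_dec _ _ H). left; apply ln_increasing; auto. subst; lra. Qed.

Lemma v_ge1 k lam w : 0 < lam < 1 -> 0 <= k -> 0 <= w -> 1 <= lam + (1-lam) * exp (k*w).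
Proof.
  intros Hl Hk Hw. assert (1 <= exp (k*w)) by (rewrite <- exp_0; apply exp_le_exp; nra). nra.
Qed.

Lemma G_pos k lam w : 0 < Gf k lam w.
Proof. apply exp_pos. Qed.

Lemma G_le1 k lam w : 0 < lam < 1 -> 0 < k -> 0 <= w -> Gf k lam w <= 1.
Proof.
  intros Hl Hk Hw. unfold Gf. apply Rle_trans with (exp 0); [|rewrite exp_0; lra]. apply exp_le_exp.
  pose proof (v_ge1 k lam w Hl (Rlt_le _ _ Hk) Hw).
  assert (0 <= ln (lam + (1 - lam) * exp (k * w))) by (rewrite <- ln_1; apply ln_le'; lra).
  unfold Rdiv. assert (0 < / k) by (apply Rinv_0_lt_compat; lra). nra.
Qed.

Lemma G_upper k lam w : 0 < lam < 1 -> 0 < k ->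
  Gf k lam w <= exp (- ln (1 - lam) / k - w).
Proof.
  intros Hl Hk. unfold Gf. apply exp_le_exp.
  pose proof (exp_pos (k*w)).
  assert (ln ((1-lam) * exp (k*w)) <= ln (lam + (1 - lam) * exp (k * w))).
  { apply ln_le'. nra. lra. }
  rewrite ln_mult, ln_exp in H0 by lra.
  unfold Rdiv. assert (0 < / k) by (apply Rinv_0_lt_compat; lra).
  replace (- ln (1 - lam) * / k - w) with ((- ln (1 - lam) - k * w) * / k) by (field; lra).
  apply Rmult_le_compat_r; lra.
Qed.

Lemma G_lower k lam w : 0 < lam < 1 -> 1 <= k -> 0 <= w ->
  1 - (1 - lam) * exp (k*w) <= Gf k lam w.
Proof.
  intros Hl Hk Hw. unfold Gf.
  set (v := lam + (1 - lam) * exp (k * w)).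
  assert (Hv : 1 <= v) by (apply v_ge1; lra).
  assert (Hln : 0 <= ln v) by (rewrite <- ln_1; apply ln_le'; lra).
  assert (H1 : exp (- ln v) <= exp (- ln v / k)).
  { apply exp_le_exp. unfold Rdiv. 
    assert (ln v * / k <= ln v).
    { rewrite <- (Rmult_1_r (ln v)) at 2. apply Rmult_le_compat_l; auto.
      rewrite <- Rinv_1. apply Rinv_le_contravar; lra. }
    lra. }
  rewrite exp_Ropp, exp_ln in H1 by lra.
  assert (2 - v <= / v).
  { assert (0 < v) by lra. apply (Rmult_le_reg_r v); auto. rewrite Rinv_l by lra. nra. }
  unfold v in *. lra.
Qed.

Lemma G_cont kn lam x : (1 <= kn)%nat -> 0 < lam < 1 -> continuous (Gf (INR kn) lam) x.
Proof.
  intros Hk Hl. apply (ex_derive_continuous (K:=R_AbsRing) (V:=R_NormedModule)).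
  eexists. apply G_deriv; auto.
Qed.

Lemma G_int kn lam : (1 <= kn)%nat -> 0 < lam < 1 ->
  let w0 := - ln (1 - lam) / INR kn in
  exists L, is_RInt_gen (Gf (INR kn) lam) (at_point 0) (Rbar_locally p_infty) L /\
     w0 - 1 <= L <= w0 + 1.
Proof.
  intros Hkn Hl w0.
  set (k := INR kn). set (G := Gf k lam).
  assert (Hk : 1 <= k) by (unfold k; apply (le_INR 1); auto).
  assert (Hw0 : 0 < w0).
  { unfold w0. assert (ln (1 - lam) < 0) by (rewrite <- ln_1; apply ln_increasing; lra).
    unfold Rdiv. apply Rmult_lt_0_compat. lra. apply Rinv_0_lt_compat; fold k; lra. }
  assert (Hex : forall a b, ex_RInt G a b).
  { intros a b. apply (ex_RInt_continuous (V:=R_CompleteNormedModule)). intros. apply G_cont; auto. }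
  set (I := fun b => RInt G 0 b).
  assert (Hmon : forall b1 b2, 0 <= b1 <= b2 -> I b1 <= I b2).
  { intros b1 b2 Hb. unfold I. rewrite <- (RInt_Chasles G 0 b1 b2) by auto.
    assert (0 <= RInt G b1 b2).
    { apply RInt_ge_0. lra. auto. intros. apply Rlt_le, G_pos. }
    change (plus (RInt G 0 b1) (RInt G b1 b2)) with (RInt G 0 b1 + RInt G b1 b2). lra. }
  assert (Hsmall : forall b, 0 <= b <= w0 -> I b <= b).
  { intros b Hb. unfold I.
    apply Rle_trans with (RInt (fun _ => 1) 0 b).
    apply RInt_le. lra. auto. apply ex_RInt_const. intros. apply G_le1; lra.
    rewrite RInt_const. change (scal (b - 0) 1) with ((b-0)*1). lra. }
  assert (Hub : forall b, 0 <= b -> I b <= w0 + 1).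
  { intros b Hb. destruct (Rle_lt_dec b w0).
    - pose proof (Hsmall b (conj Hb r)). lra.
    - pose proof (Hsmall w0 (conj (Rlt_le _ _ Hw0) (Rle_refl _))).
      unfold I. rewrite <- (RInt_Chasles G 0 w0 b) by auto.
      change (plus (RInt G 0 w0) (RInt G w0 b)) with (RInt G 0 w0 + RInt G w0 b).
      assert (Hi : is_RInt (fun x => exp (w0 - x)) w0 b
                    (minus ((fun x => - exp (w0 - x)) b) ((fun x => - exp (w0 - x)) w0))).
      { apply (is_RInt_derive (V:=R_CompleteNormedModule) (fun x => - exp (w0 - x)) (fun x => exp (w0 - x)) w0 b).
        - intros x _. auto_derive. auto. unfold Rminus; ring.
        - intros x _. apply (ex_derive_continuous (K:=R_AbsRing) (V:=R_NormedModule)).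
          auto_derive. auto. }
      assert (RInt G w0 b <= RInt (fun x => exp (w0 - x)) w0 b).
      { apply RInt_le. lra. auto. eexists; exact Hi.
        intros x _. apply G_upper; auto. lra. }
      rewrite (is_RInt_unique _ _ _ _ Hi) in H0.
      change (minus (- exp (w0 - b)) (- exp (w0 - w0))) with (- exp (w0 - b) - - exp (w0 - w0)) in H0.
      replace (w0 - w0) with 0 in H0 by ring. rewrite exp_0 in H0.
      pose proof (exp_pos (w0 - b)). fold I in H. unfold I in H. lra. }
  assert (Hlb : w0 - 1 <= I w0).
  { set (mu := 1 - lam).
    assert (Hi : is_RInt (fun x => 1 - mu * exp (k * x)) 0 w0
                    (minus ((fun x => x - mu * exp (k*x) / k) w0) ((fun x => x - mu * exp (k*x) / k) 0))).
    { apply (is_RInt_derive (V:=R_CompleteNormedModule) (fun x => x - mu * exp (k*x) / k) (fun x => 1 - mu * exp (k * x)) 0 w0).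
      - intros x _. auto_derive. auto. field. lra.
      - intros x _. apply (ex_derive_continuous (K:=R_AbsRing) (V:=R_NormedModule)).
        auto_derive. auto. }
    assert (RInt (fun x => 1 - mu * exp (k * x)) 0 w0 <= I w0).
    { apply RInt_le. lra. eexists; exact Hi. auto.
      intros x Hx. apply G_lower; auto. lra. }
    rewrite (is_RInt_unique _ _ _ _ Hi) in H.
    change (minus (w0 - mu * exp (k * w0) / k) (0 - mu * exp (k * 0) / k))
      with ((w0 - mu * exp (k * w0) / k) - (0 - mu * exp (k * 0) / k)) in H.
    replace (k * w0) with (- ln mu) in H by (unfold w0, mu; fold k; field; lra).
    rewrite exp_Ropp, exp_ln in H by (unfold mu; lra). rewrite Rmult_0_r, exp_0 in H.
    replace (mu * / mu) with 1 in H by (field; unfold mu; lra).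
    assert (0 < mu / k) by (apply Rdiv_lt_0_compat; unfold mu; lra).
    assert (1 / k <= 1).
    { unfold Rdiv. rewrite Rmult_1_l. rewrite <- Rinv_1. apply Rinv_le_contravar; lra. }
    replace ((w0 - 1 / k) - (0 - mu * 1 / k)) with (w0 - 1/k + mu/k) in H by (field; lra).
    lra. }
  set (E := fun x => exists b, 0 <= b /\ x = I b).
  assert (HE1 : bound E).
  { exists (w0 + 1). intros x [b [Hb ->]]. apply Hub; auto. }
  assert (HE2 : exists x, E x) by (exists (I 0); exists 0; split; [lra|reflexivity]).
  destruct (completeness E HE1 HE2) as [L [HL1 HL2]].
  exists L. split.
  - intros P [eps HP].
    assert (Hb0 : exists b0, 0 <= b0 /\ L - eps < I b0).
    { destruct (classic (exists b0, 0 <= b0 /\ L - eps < I b0)) as [h|h]; auto.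
      exfalso. assert (is_upper_bound E (L - eps)).
      { intros x [b [Hb ->]]. destruct (Rle_lt_dec (I b) (L-eps)); auto.
        exfalso; apply h; eauto. }
      specialize (HL2 _ H). pose proof (cond_pos eps). lra. }
    destruct Hb0 as [b0 [Hb0 Hb0']].
    apply (Filter_prod _ _ _ (fun a => a = 0) (fun b => b0 < b)).
    reflexivity. exists b0; auto.
    intros x y -> Hy. simpl. exists (I y). split.
    + unfold I. apply (RInt_correct (V:=R_CompleteNormedModule)). auto.
    + apply HP. apply ball_R.
      assert (I y <= L) by (apply HL1; exists y; split; [lra|reflexivity]).
      assert (I b0 <= I y) by (apply Hmon; lra).
      rewrite Rabs_left1; lra.
  - split.
    + apply Rle_trans with (I w0); auto. apply HL1. exists w0; split; [lra|reflexivity].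
    + apply HL2. intros x [b [Hb ->]]. apply Hub; auto.
Qed.


Lemma pow_lip n x y B : Rabs x <= B -> Rabs y <= B ->
  Rabs (x^(S n) - y^(S n)) <= INR (S n) * B^n * Rabs (x - y).
Proof.
  intros Hx Hy. assert (HB : 0 <= B) by (pose proof (Rabs_pos x); lra).
  induction n.
  - simpl. rewrite !Rmult_1_r. lra.
  - replace (x ^ S (S n) - y ^ S (S n)) with (x^(S n)*(x-y) + y*(x^(S n) - y^(S n)))
      by (simpl; ring).
    eapply Rle_trans. apply Rabs_triang. rewrite !Rabs_mult.
    assert (H1 : Rabs (x ^ S n) <= B ^ S n).
    { rewrite <- RPow_abs. apply pow_incr. split; [apply Rabs_pos|exact Hx]. }
    assert (H2 : Rabs y * Rabs (x ^ S n - y ^ S n) <= B * (INR (S n) * B ^ n * Rabs (x - y))).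
    { apply Rmult_le_compat; auto using Rabs_pos. }
    assert (H3 : Rabs (x ^ S n) * Rabs (x - y) <= B ^ S n * Rabs (x - y)).
    { apply Rmult_le_compat_r; auto using Rabs_pos. }
    rewrite S_INR. simpl pow in *. 
    assert (H4 : 0 <= B * B^n * Rabs (x-y)).
    { apply Rmult_le_pos; [apply Rmult_le_pos; auto; apply pow_le; auto | apply Rabs_pos]. }
    nra.
Qed.

Lemma right_lim_eps f (r : R) : filterlim f (at_right 0) (locally 1) -> 0 < r ->
  exists δ, 0 < δ /\ forall x, 0 < x < δ -> Rabs (f x - 1) < r.
Proof.
  intros H Hr. apply filterlim_locally with (eps := mkposreal r Hr) in H.
  destruct H as [δ Hδ]. exists δ. split. apply cond_pos.
  intros x Hx. apply Hδ. apply ball_R. rewrite Rminus_0_r, Rabs_right; lra. lra.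
Qed.

Lemma deriv_cont f x l : is_derive f x l -> continuity_pt f x.
Proof.
  intros H. apply continuity_pt_filterlim. apply (ex_derive_continuous (K:=R_AbsRing) (V:=R_NormedModule)). exists l. exact H.
Qed.

Lemma ode_unique (n : nat) (lam : R) (F G : R -> R) (w : R) :
  0 < lam ->
  (forall x, 0 < x -> is_derive F x (lam * F x ^ S n - F x)) ->
  (forall x, 0 < x -> is_derive G x (lam * G x ^ S n - G x)) ->
  filterlim F (at_right 0) (locally 1) ->
  filterlim G (at_right 0) (locally 1) ->
  (forall x, 0 < x -> Rabs (G x) <= 1) ->
  0 < w -> F w = G w.
Proof.
  intros Hlam HF HG HF0 HG0 HGb Hw.
  destruct (right_lim_eps F 1 HF0 Rlt_0_1) as [d1 [Hd1 Hd1F]].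
  set (a := Rmin (d1/2) w).
  assert (Ha : 0 < a /\ a <= w /\ a < d1).
  { unfold a. split; [apply Rmin_glb_lt; lra|]. split; [apply Rmin_r|].
    eapply Rle_lt_trans; [apply Rmin_l| lra]. }
  assert (HcF : forall c, a <= c <= w -> continuity_pt F c).
  { intros c Hc. eapply deriv_cont. apply HF. lra. }
  destruct (continuity_ab_maj F a w (proj1 (proj2 Ha)) HcF) as [Mx [HMx HMx']].
  destruct (continuity_ab_min F a w (proj1 (proj2 Ha)) HcF) as [mx [Hmx Hmx']].
  set (B := 2 + Rabs (F Mx) + Rabs (F mx) + 1).
  assert (HFB : forall x, 0 < x <= w -> Rabs (F x) <= B).
  { intros x Hx. pose proof (Rabs_pos (F Mx)). pose proof (Rabs_pos (F mx)).
    destruct (Rlt_le_dec x a).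
    - assert (Rabs (F x - 1) < 1) by (apply Hd1F; lra).
      apply Rabs_def2 in H1. apply Rabs_le. unfold B. lra.
    - pose proof (HMx x (conj r (proj2 Hx))). pose proof (Hmx x (conj r (proj2 Hx))).
      pose proof (Rle_abs (F Mx)). pose proof (Rle_abs (- F mx)). rewrite Rabs_Ropp in H4.
      apply Rabs_le. unfold B. lra. }
  assert (HGB : forall x, 0 < x <= w -> Rabs (G x) <= B).
  { intros x Hx. pose proof (Rabs_pos (F Mx)). pose proof (Rabs_pos (F mx)).
    pose proof (HGb x (proj1 Hx)). unfold B. lra. }
  assert (HB0 : 0 <= B) by (unfold B; pose proof (Rabs_pos (F Mx)); pose proof (Rabs_pos (F mx)); lra).
  set (Lc := INR (S n) * B ^ n).
  assert (HLc : 0 <= Lc) by (unfold Lc; apply Rmult_le_pos; [apply pos_INR | apply pow_le; lra]).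
  set (K := lam * Lc + 1).
  assert (HK : 0 < K) by (unfold K; nra).
  set (psi := fun x => (F x - G x) ^ 2 * exp (-(2*K) * x)).
  set (dpsi := fun x => (INR 2 * ((lam * F x ^ S n - F x) - (lam * G x ^ S n - G x)) * (F x - G x) ^ 1)
      * exp (-(2*K) * x) + (F x - G x) ^ 2 * (-(2*K) * exp (-(2*K)*x))).
  assert (Hpsi : forall x, 0 < x -> is_derive psi x (dpsi x)).
  { intros x Hx. unfold psi, dpsi.
    apply (is_derive_mult (fun x => (F x - G x) ^ 2) (fun x => exp (-(2*K) * x))).
    - apply (is_derive_pow (fun x => F x - G x) 2).
      apply (is_derive_minus F G). apply HF; lra. apply HG; lra.
    - auto_derive. auto. ring.
    - intros; apply Rmult_comm. }
  assert (Hdpsi : forall x, 0 < x <= w -> dpsi x <= 0).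
  { intros x Hx. unfold dpsi.
    set (D := F x - G x). set (P := F x ^ S n - G x ^ S n).
    assert (HP : Rabs P <= Lc * Rabs D) by (apply pow_lip; auto).
    assert (HDP : D * P <= Lc * D^2).
    { eapply Rle_trans. apply Rle_abs. rewrite Rabs_mult.
      replace (D^2) with (Rabs D * Rabs D) by (rewrite <- Rabs_mult; simpl; rewrite Rmult_1_r; apply Rabs_right; nra).
      pose proof (Rabs_pos D). nra. }
    pose proof (exp_pos (-(2*K)*x)) as He.
    replace ((lam * F x ^ S n - F x) - (lam * G x ^ S n - G x)) with (lam * P - D) by (unfold P, D; ring).
    assert (H1 : lam * (D * P - Lc * D^2) <= 0) by nra.
    assert (H2 : 0 <= D^2) by apply pow2_ge_0.
    set (E := exp (-(2*K)*x)) in *.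
    replace (INR 2 * (lam * P - D) * D ^ 1 * E + D ^ 2 * (- (2 * K) * E))
      with (E * (2 * (lam * (D * P - Lc * D^2)) - 4 * D^2)) by (unfold K; simpl; ring).
    assert (0 <= E) by lra. nra. }
  assert (Hmono : forall e, 0 < e <= w -> (F w - G w)^2 <= (F e - G e)^2 * exp (2*K*w)).
  { intros e He.
    destruct (MVT_gen psi e w dpsi) as [c [Hc Hc']].
    - intros x Hx. apply Hpsi. rewrite Rmin_left in Hx; lra.
    - intros x Hx. eapply deriv_cont. apply Hpsi. rewrite Rmin_left in Hx; lra.
    - rewrite Rmin_left, Rmax_right in Hc by lra.
      assert (dpsi c * (w - e) <= 0).
      { pose proof (Hdpsi c ltac:(lra)). nra. }
      unfold psi in Hc'.
      assert (Hle : (F w - G w) ^ 2 * exp (- (2 * K) * w) <= (F e - G e) ^ 2) .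
      { assert (exp (- (2*K) * e) <= 1).
        { rewrite <- exp_0. apply exp_le_exp. nra. }
        assert (0 <= (F e - G e) ^ 2) by (apply pow2_ge_0). nra. }
      replace ((F w - G w) ^ 2) with ((F w - G w) ^ 2 * exp (- (2 * K) * w) * exp (2*K*w)).
      apply Rmult_le_compat_r. apply Rlt_le, exp_pos. exact Hle.
      rewrite Rmult_assoc, <- exp_plus. replace (- (2 * K) * w + 2 * K * w) with 0 by ring.
      rewrite exp_0; ring. }
  set (C := exp (2*K*w)).
  assert (HC : 0 < C) by apply exp_pos.
  assert (Hsmall : forall eta, 0 < eta -> (F w - G w)^2 < eta).
  { intros eta Heta.
    set (r := Rmin 1 (eta / (4*C))).
    assert (Hr : 0 < r /\ r <= 1 /\ r <= eta/(4*C)).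
    { unfold r. split. apply Rmin_glb_lt. lra. apply Rdiv_lt_0_compat; lra.
      split; [apply Rmin_l|apply Rmin_r]. }
    destruct (right_lim_eps F r HF0 (proj1 Hr)) as [dF [HdF HdF']].
    destruct (right_lim_eps G r HG0 (proj1 Hr)) as [dG [HdG HdG']].
    set (e := Rmin w (Rmin dF dG) / 2).
    assert (He : 0 < e /\ e <= w /\ e < dF /\ e < dG).
    { unfold e. pose proof (Rmin_l w (Rmin dF dG)). pose proof (Rmin_r w (Rmin dF dG)).
      pose proof (Rmin_l dF dG). pose proof (Rmin_r dF dG).
      assert (0 < Rmin w (Rmin dF dG)) by (repeat apply Rmin_glb_lt; lra). lra. }
    pose proof (Hmono e (conj (proj1 He) (proj1 (proj2 He)))) as Hm.
    assert (A1 : Rabs (F e - 1) < r) by (apply HdF'; lra).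
    assert (A2 : Rabs (G e - 1) < r) by (apply HdG'; lra).
    apply Rabs_def2 in A1. apply Rabs_def2 in A2.
    assert (A3 : (F e - G e)^2 < 4 * r^2) by nra.
    assert (A4 : 4 * r^2 * C <= eta).
    { assert (r^2 <= r) by nra.
      assert (4 * r * C <= eta).
      { destruct Hr as [_ [_ Hr]]. apply Rmult_le_compat_r with (r := 4*C) in Hr; [|lra].
        unfold Rdiv in Hr. rewrite Rmult_assoc, Rinv_l in Hr by lra. lra. }
      nra. }
    assert ((F e - G e)^2 * C < 4 * r^2 * C) by (apply Rmult_lt_compat_r; lra).
    change (exp (2 * K * w)) with C in Hm. lra. }
  destruct (Req_dec (F w) (G w)) as [Heq|Hne]; auto.
  assert (0 < (F w - G w)^2).
  { apply pow2_gt_0. intro Hz. apply Hne. lra. }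
  specialize (Hsmall _ H). lra.
Qed.

Theorem corollary2p4 (d : nat) (Hd : (2 <= d)%nat) (F : R -> R -> R)
  (HF : forall lam, 0 < lam < 1 -> red_ccdf_solution d lam (F lam)) :
  exists ER : R -> R,
    (forall lam, 0 < lam < 1 ->
       is_RInt_gen (F lam) (at_point 0) (Rbar_locally p_infty) (ER lam)) /\
    filterlim (fun lam => - ER lam / ln (1 - lam)) (at_left 1)
      (locally (1 / (INR d - 1))).
Proof.
  destruct d as [|kn]; [lia|].
  assert (Hkn : (1 <= kn)%nat) by lia.
  set (k := INR kn).
  assert (Hk : 1 <= k) by (unfold k; apply (le_INR 1); auto).
  assert (HFG : forall lam, 0 < lam < 1 -> forall w, 0 < w -> F lam w = Gf k lam w).
  { intros lam Hl w Hw. destruct (HF lam Hl) as [_ [HF0 HFd]].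
    apply (ode_unique kn lam); auto; try lra.
    - intros x _. apply G_deriv; auto.
    - apply (filterlim_filter_le_1 (F := locally 0)). apply filter_le_within.
      assert (HG0 : Gf k lam 0 = 1).
      { unfold Gf. rewrite Rmult_0_r, exp_0, Rmult_1_r.
        replace (lam + (1 - lam)) with 1 by ring. rewrite ln_1.
        replace (- 0 / k) with 0 by (field; lra). apply exp_0. }
      pose proof (G_cont kn lam 0 Hkn Hl) as Hc. unfold continuous in Hc.
      fold k in Hc. rewrite HG0 in Hc. exact Hc.
    - intros x Hx. rewrite Rabs_right. apply G_le1; lra. apply Rle_ge, Rlt_le, G_pos. }
  set (ER := fun lam => RInt_gen (F lam) (at_point 0) (Rbar_locally p_infty)).
  assert (HER : forall lam, 0 < lam < 1 ->
     is_RInt_gen (F lam) (at_point 0) (Rbar_locally p_infty) (ER lam) /\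
     - ln (1 - lam) / k - 1 <= ER lam <= - ln (1 - lam) / k + 1).
  { intros lam Hl. destruct (G_int kn lam Hkn Hl) as [L [HL1 HL2]].
    assert (HL : is_RInt_gen (F lam) (at_point 0) (Rbar_locally p_infty) L).
    { apply (is_RInt_gen_ext (Gf k lam)).
      - apply (Filter_prod _ _ _ (fun a => a = 0) (fun b => 0 < b)).
        reflexivity. exists 0; auto.
        intros a b -> Hb x Hx. simpl in Hx. rewrite Rmin_left, Rmax_right in Hx by lra.
        symmetry. apply HFG; auto. lra.
      - exact HL1. }
    unfold ER. rewrite (is_RInt_gen_unique (V:=R_CompleteNormedModule) _ _ HL).
    split; auto. }
  exists ER. split.
  - intros lam Hl. apply HER; auto.
  - apply filterlim_locally. intros eps.
    pose proof (cond_pos eps) as He.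
    assert (Hd0 : 0 < Rmin 1 (exp (- k / eps))) by (apply Rmin_glb_lt; [lra|apply exp_pos]).
    exists (mkposreal _ Hd0). intros y Hy Hy1.
    change (Rabs (y - 1) < Rmin 1 (exp (- k / eps))) in Hy. rewrite Rabs_left in Hy by lra.
    pose proof (Rmin_l 1 (exp (- k / eps))). pose proof (Rmin_r 1 (exp (- k / eps))).
    assert (Hl : 0 < y < 1) by lra.
    destruct (HER y Hl) as [_ [HL1 HL2]].
    set (mu := 1 - y) in *. set (L := ER y) in *.
    set (m := ln mu) in *. set (w0 := - m / k) in *.
    assert (Hm : m < - k / eps).
    { unfold m. rewrite <- (ln_exp (- k / eps)). apply ln_increasing; unfold mu; lra. }
    assert (Hkw : - m = k * w0) by (unfold w0; field; lra).
    assert (Hw0 : eps * w0 > 1).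
    { unfold w0. unfold Rdiv in *. 
      assert (H3 : - m * eps > k).
      { apply Rmult_lt_compat_r with (r := eps) in Hm; auto.
        replace (- k * / eps * eps) with (- k) in Hm by (field; lra). lra. }
      replace (eps * (- m * / k)) with ((- m * eps) * / k) by ring.
      apply Rmult_lt_reg_r with k; [lra|]. rewrite Rmult_assoc, Rinv_l by lra. lra. }
    apply ball_R. rewrite S_INR. replace (INR kn + 1 - 1) with k by (unfold k; ring).
    assert (Hw0p : 0 < w0) by nra.
    set (P := k * w0).
    assert (HP : 0 < P) by (unfold P; nra).
    replace (- L / m - 1 / k) with ((L - w0) * / P).
    2:{ unfold P. replace m with (- (k * w0)) by lra. field. split; lra. }
    assert (HepsP : 1 < eps * P) by (unfold P; nra).
    assert (Hq : / P * P = 1) by (field; lra).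
    assert (0 < / P) by (apply Rinv_0_lt_compat; lra).
    apply Rabs_def1; nra.
Qed.
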